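(* Assume (RHS.1), (RHS.2), (BC.1), (BC.2), and, if (RHS.2b) holds, condition (M.1). Let $u^0_{\mathfrak h}\in\mathbb V_h$ be any function with $u^0_{\mathfrak h}(z)=\tilde g_\varepsilon(z)$ for all $z\in\mathcal N_h^b$, and define $u^{n+1}_{\mathfrak h}\in\mathbb V_h$ for $n\ge0$ by $$u^{n+1}_{\mathfrak h}(z)=\tfrac12\Big[\varepsilon^2f(z)+\max_{x\in\mathcal N_{\mathfrak h}(z)}u^n_{\mathfrak h}(x)+\min_{x\in\mathcal N_{\mathfrak h}(z)}u^n_{\mathfrak h}(x)\Big]\ \ (z\in\mathcal N_h^I),\qquad u^{n+1}_{\mathfrak h}(z)=\tilde g_\varepsilon(z)\ \ (z\in\mathcal N_h^b).$$ Then the sequence $\{u^n_{\mathfrak h}\}_{n\ge0}$ converges to $u_{\mathfrak h}$, the solution of the discrete problem.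
   Context: Setting: $\Omega\subset\mathbb R^d$ ($d\ge1$) is a bounded domain with continuous boundary. For $r>0$, $\Omega^{(r)}=\{x\in\Omega:\operatorname{dist}(x,\partial\Omega)>r\}$. $\mathcal T_h$ is a mesh of closed simplices, $h=\max_T\operatorname{diam}T$, $\Omega_h$ the interior of the union of the simplices, with $\Omega^{(h)}\subset\Omega_h\subset\Omega$; $\mathcal N_h$ the set of vertices. $\mathbb V_h$: continuous piecewise linear functions on $\mathcal T_h$ (determined by nodal values), hat basis $\{\hat\varphi_z\}$, Lagrange interpolant $\mathcal I_h$. Parameters $\mathfrak h=(h,\varepsilon,\theta)$, $\varepsilon\in[h,\operatorname{diam}\Omega]$, $0<\theta\le1$. $\mathcal N_h^I=\mathcal N_h\cap\Omega^{(2\varepsilon)}$, $\mathcal N_h^b=\mathcal N_h\setminus\mathcal N_h^I$. $\mathbb S_\theta$: finite symmetric subset of the unit sphere $\mathbb S$ such that each $v\in\mathbb S$ has $v_\theta\in\mathbb S_\theta$ with $|v-v_\theta|\le\theta$. For $z\in\mathcal N_h^I$, $\mathcal N_{\mathfrak h}(z)=\{z\}\cup\{z+\varepsilon v_\theta:v_\theta\in\mathbb S_\theta\}$, $-\Delta^\diamond_{\infty,\mathfrak h}w(z)=\varepsilon^{-2}\big(2w(z)-\max_{x\in\mathcal N_{\mathfrak h}(z)}\mathcal I_hw(x)-\min_{x\in\mathcal N_{\mathfrak h}(z)}\mathcal I_hw(x)\big)$, $\widetilde{\mathcal N}_{\mathfrak h}(z)=\{z\}\cup\{z'\in\mathcal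 N_h:\exists v_\theta\in\mathbb S_\theta,\ \hat\varphi_{z'}(z+\varepsilon v_\theta)>0\}$. Assumptions: (RHS.1) $f\in C(\Omega)\cap L^\infty(\Omega)$. (RHS.2) either (RHS.2a) $\sup_\Omega f<0$ or $\inf_\Omega f>0$, or (RHS.2b) $f\equiv0$. (BC.1) $g\in C(\partial\Omega)$. (BC.2) for every $\varepsilon>0$ a function $\tilde g_\varepsilon\in C(\overline\Omega)$ approximating $g$ is given (with $\tilde g_\varepsilon\in C^{0,\alpha}(\overline\Omega)$ and $\|g-\tilde g_\varepsilon\|_{L^\infty(\partial\Omega)}\le C\varepsilon^\alpha$ whenever $g\in C^{0,\alpha}(\partial\Omega)$, $\alpha\in[0,1]$). (M.1) for every nonempty $S\subset\mathcal N_h^I$ there are $z\in S$, $z'\in\mathcal N_h\setminus S$ with $z'\in\widetilde{\mathcal N}_{\mathfrak h}(z)$. Discrete problem: find $u_{\mathfrak h}\in\mathbb V_h$ with $-\Delta^\diamond_{\infty,\mathfrak h}u_{\mathfrak h}(z)=f(z)$ for $z\in\mathcal N_h^I$ and $u_{\mathfrak h}(z)=\tilde g_\varepsilon(z)$ for $z\in\mathcal N_h^b$. *)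

(* Defs.v *)
From HB Require Import structures.
From mathcomp Require Import all_boot all_order all_algebra.
From mathcomp Require Import all_classical all_reals all_analysis.
Set Implicit Arguments. Unset Strict Implicit. Unset Printing Implicit Defensive.
Import Order.TTheory GRing.Theory Num.Theory.
Import numFieldNormedType.Exports.
Local Open Scope classical_set_scope.
Local Open Scope ring_scope.

(* Points of R^d with d = n.+1 >= 1 are row vectors 'rV[R]_(n.+1).
   All metric notions (norm, distance, diameter, unit sphere) are Euclidean
   and defined explicitly below (the library norm on matrices is the max norm).
   Purely topological notions (open, connected, closure, interior, continuity)
   are the library's; they do not depend on the choice of norm. *)

Section FEM.
Context {R : realType} {n : nat}.
Local Notation pt := 'rV[R]_(n.+1).

Definition enorm (x : pt) : R := Num.sqrt (\sum_(i < n.+1) x ord0 i ^+ 2).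
Definition edist (x y : pt) : R := enorm (x - y).

Definition bdry (A : set pt) : set pt := closure A `\` interior A.

Definition dist_set (x : pt) (A : set pt) : R := inf [set edist x y | y in A].

Definition inner (Om : set pt) (r : R) : set pt :=
  [set x | Om x /\ dist_set x (bdry Om) > r].

Definition ebounded (A : set pt) : Prop :=
  exists M : R, forall x, A x -> enorm x <= M.

Definition diam (A : set pt) : R := sup [set edist x y | x in A & y in A].

(* Omega has continuous boundary: near each boundary point, after a rigid motion,
   Omega is the region strictly above the graph of a continuous function of
   d-1 variables. *)
Definition continuous_boundary (Om : set pt) : Prop :=
  forall x0, bdry Om x0 ->
  exists (r : R) (Q : 'M[R]_(n.+1)) (gam : 'rV[R]_n -> R),
    [/\ 0 < r, Q *m Q^T = 1%:M, continuous gam &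
      forall x, edist x x0 < r ->
        (Om x <-> let y := (x - x0) *m Q in
                   y ord0 ord0 > gam (\row_(i < n) y ord0 (lift ord0 i)))].

Definition bounded_domain_cont_bdry (Om : set pt) : Prop :=
  [/\ open Om, Om !=set0, connected Om, ebounded Om & continuous_boundary Om].

Definition simplex := 'I_(n.+2) -> pt.

Definition barycentric (lam : 'I_(n.+2) -> R) : Prop :=
  (forall i, 0 <= lam i) /\ \sum_i lam i = 1.

Definition bary_point (T : simplex) (lam : 'I_(n.+2) -> R) : pt :=
  \sum_i lam i *: T i.

Definition aff_indep (T : simplex) : Prop :=
  forall lam : 'I_(n.+2) -> R,
    \sum_i lam i = 0 -> \sum_i lam i *: T i = 0 -> forall i, lam i = 0.

Definition closed_simplex (T : simplex) : set pt :=
  [set bary_point T lam | lam in barycentric].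

(* a mesh: finite list of non-degenerate closed simplices, conforming:
   two simplices intersect in the (possibly empty) common face spanned by
   their common vertices *)
Definition conforming_mesh (M : seq simplex) : Prop :=
  (forall T, T \in M -> aff_indep T) /\
  (forall T T', T \in M -> T' \in M ->
     closed_simplex T `&` closed_simplex T' =
     [set bary_point T lam | lam in
        [set lam | barycentric lam /\
                   forall i, lam i != 0 -> exists j, T' j = T i]]).

Definition mesh_union (M : seq simplex) : set pt :=
  [set x | exists2 T, T \in M & closed_simplex T x].

Definition Omega_h (M : seq simplex) : set pt := interior (mesh_union M).

Definition meshsize (M : seq simplex) (h : R) : Prop :=
  (forall T, T \in M -> forall i j, edist (T i) (T j) <= h) /\
  (exists2 T, T \in M & exists i j, edist (T i) (T j) = h).

Definition nodes (M : seq simplex) : set pt :=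
  [set x | exists2 T, T \in M & exists i, T i = x].

(* V_h : continuous piecewise linear functions (affine on every simplex);
   only the values on the union of the simplices are relevant *)
Definition inVh (M : seq simplex) (w : pt -> R) : Prop :=
  forall T, T \in M -> forall lam, barycentric lam ->
    w (bary_point T lam) = \sum_i lam i * w (T i).

Definition is_hat (M : seq simplex) (z : pt) (phi : pt -> R) : Prop :=
  inVh M phi /\ forall y, nodes M y -> phi y = (if y == z then 1 else 0).

Definition unit_sphere : set pt := [set v | enorm v = 1].
Definition is_Stheta (St : seq pt) (theta : R) : Prop :=
  [/\ forall v, v \in St -> enorm v = 1,
      forall v, v \in St -> - v \in St &
      forall v, unit_sphere v -> exists2 w, w \in St & enorm (v - w) <= theta].

Definition nodes_I (Om : set pt) (M : seq simplex) (eps : R) : set pt :=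
  nodes M `&` inner Om (2 * eps).
Definition nodes_b (Om : set pt) (M : seq simplex) (eps : R) : set pt :=
  nodes M `\` nodes_I Om M eps.

(* max / min of w over N_frak_h(z) = {z} U {z + eps v : v in S_theta} *)
Definition maxN (St : seq pt) (eps : R) (w : pt -> R) (z : pt) : R :=
  \big[Num.max/w z]_(v <- St) w (z + eps *: v).
Definition minN (St : seq pt) (eps : R) (w : pt -> R) (z : pt) : R :=
  \big[Num.min/w z]_(v <- St) w (z + eps *: v).

Definition disc_inf_lap (St : seq pt) (eps : R) (w : pt -> R) (z : pt) : R :=
  eps ^- 2 * (2 * w z - maxN St eps w z - minN St eps w z).

Definition solves_discrete (Om : set pt) (M : seq simplex) (St : seq pt)
  (eps : R) (f gt : pt -> R) (u : pt -> R) : Prop :=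
  [/\ inVh M u,
      forall z, nodes_I Om M eps z -> disc_inf_lap St eps u z = f z &
      forall z, nodes_b Om M eps z -> u z = gt z].

Definition in_Ntilde (M : seq simplex) (St : seq pt) (eps : R) (z z' : pt) : Prop :=
  z' = z \/ (nodes M z' /\ exists2 v, v \in St &
               forall phi, is_hat M z' phi -> phi (z + eps *: v) > 0).

Definition condM1 (Om : set pt) (M : seq simplex) (St : seq pt) (eps : R) : Prop :=
  forall S : set pt, S !=set0 -> S `<=` nodes_I Om M eps ->
    exists z z', [/\ S z, nodes M z', ~ S z' & in_Ntilde M St eps z z'].

Definition holder (alpha : R) (A : set pt) (phi : pt -> R) : Prop :=
  exists C : R, forall x y, A x -> A y -> `|phi x - phi y| <= C * (edist x y) `^ alpha.

End FEM.

(* Main.v *)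
Require Import Defs.
From HB Require Import structures.
From mathcomp Require Import all_boot all_order all_algebra.
From mathcomp Require Import all_classical all_reals all_analysis.
From mathcomp Require Import ring lra.
Import Order.TTheory GRing.Theory Num.Theory.
Import numFieldNormedType.Exports.
Local Open Scope classical_set_scope.
Local Open Scope ring_scope.
Section Euc.
Context {R : realType} {n : nat}.
Local Notation pt := 'rV[R]_(n.+1).
Implicit Types x y : pt.

Definition ssq x : R := \sum_(i < n.+1) x ord0 i ^+ 2.
Lemma ssq_ge0 x : 0 <= ssq x.
Proof. by apply: sumr_ge0 => i _; rewrite sqr_ge0. Qed.
Lemma enormE x : enorm x = Num.sqrt (ssq x). Proof. by []. Qed.
Lemma enorm_ge0 x : 0 <= enorm x. Proof. exact: sqrtr_ge0. Qed.
Lemma enorm_sq x : enorm x ^+ 2 = ssq x.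
Proof. by rewrite enormE sqr_sqrtr // ssq_ge0. Qed.

Lemma ssqZ (c : R) x : ssq (c *: x) = c ^+ 2 * ssq x.
Proof. rewrite /ssq mulr_sumr; apply: eq_bigr => i _; rewrite mxE; by rewrite exprMn. Qed.

Lemma enormZ (c : R) x : enorm (c *: x) = `|c| * enorm x.
Proof. by rewrite !enormE ssqZ sqrtrM ?sqr_ge0 // sqrtr_sqr. Qed.

Lemma enormN x : enorm (- x) = enorm x.
Proof. by rewrite -scaleN1r enormZ normrN normr1 mul1r. Qed.

Lemma edistC x y : Defs.edist x y = Defs.edist y x.
Proof. by rewrite /Defs.edist -enormN opprB. Qed.

Lemma enorm_eq0 x : enorm x = 0 -> x = 0.
Proof.
rewrite enormE => /eqP; rewrite sqrtr_eq0 => H.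
have H0 : ssq x = 0 by apply/eqP; rewrite eq_le H ssq_ge0.
apply/rowP => i; rewrite mxE.
have := @psumr_eq0P _ _ (fun _ => true) (fun i => x ord0 i ^+ 2) (fun i _ => sqr_ge0 _) H0 i isT.
by move/eqP; rewrite sqrf_eq0 => /eqP.
Qed.

Lemma cauchy_schwarz (a b : 'I_n.+1 -> R) :
  (\sum_i a i * b i) ^+ 2 <= (\sum_i a i ^+ 2) * (\sum_i b i ^+ 2).
Proof.
set S := \sum_i a i * b i; set A := \sum_i a i ^+ 2; set B := \sum_i b i ^+ 2.
have B0 : 0 <= B by apply: sumr_ge0 => i _; rewrite sqr_ge0.
have A0 : 0 <= A by apply: sumr_ge0 => i _; rewrite sqr_ge0.
have [Bz|Bnz] := eqVneq B 0.
  have bz i : b i = 0.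
    have := @psumr_eq0P _ _ (fun _ => true) (fun i => b i ^+ 2) (fun i _ => sqr_ge0 _) Bz i isT.
    by move/eqP; rewrite sqrf_eq0 => /eqP.
  have -> : S = 0 by rewrite /S big1 // => i _; rewrite bz mulr0.
  by rewrite expr0n /= Bz mulr0.
have Bp : 0 < B by rewrite lt0r Bnz B0.
set t := S / B.
have H : 0 <= \sum_i (a i - t * b i) ^+ 2 by apply: sumr_ge0 => i _; rewrite sqr_ge0.
have E : \sum_i (a i - t * b i) ^+ 2 = A - 2 * t * S + t ^+ 2 * B.
  rewrite /A /S /B mulr_sumr mulr_sumr -sumrB -big_split /=; apply: eq_bigr => i _.
  by rewrite /t; ring.
rewrite E /t in H.
have : 0 <= (A - 2 * (S / B) * S + (S / B) ^+ 2 * B) * B by rewrite mulr_ge0 // ltW.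
have -> : (A - 2 * (S / B) * S + (S / B) ^+ 2 * B) * B = A * B - S ^+ 2.
  by field.
by rewrite subr_ge0 mulrC.
Qed.

Lemma enorm_triangle x y : enorm (x + y) <= enorm x + enorm y.
Proof.
rewrite -(@ler_pXn2r _ 2) ?nnegrE ?addr_ge0 ?enorm_ge0 //.
rewrite enorm_sq sqrrD !enorm_sq.
have E : ssq (x + y) = ssq x + 2 * \sum_i x ord0 i * y ord0 i + ssq y.
  rewrite /ssq mulr_sumr -!big_split /=; apply: eq_bigr => i _; rewrite mxE; ring.
rewrite E lerD2r lerD2l -[_ * _ *+ 2]mulr_natl ler_pM2l //.
have CS := cauchy_schwarz (fun i => x ord0 i) (fun i => y ord0 i).
rewrite (le_trans (ler_norm _)) //.
rewrite -(@ler_pXn2r _ 2) ?nnegrE ?mulr_ge0 ?enorm_ge0 //.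
rewrite real_normK ?num_real //.
by rewrite exprMn !enorm_sq.
Qed.

Lemma edist_triangle x y z : Defs.edist x z <= Defs.edist x y + Defs.edist y z.
Proof. by rewrite /Defs.edist (_ : x - z = (x - y) + (y - z)) ?enorm_triangle // addrA subrK. Qed.

End Euc.
Section Geo.
Context {R : realType} {n : nat}.
Local Notation pt := 'rV[R]_(n.+1).
Lemma cont_seg (z v : pt) (e : R) : continuous (fun t : R => z + (t * e) *: v).
Proof.
move=> t; apply: cvgD; first exact: cvg_cst.
apply: cvgZ; last exact: cvg_cst.
apply: cvgM; [exact: cvg_id | exact: cvg_cst].
Qed.

Lemma dist_le (A : set pt) z b : A b -> dist_set z A <= Defs.edist z b.
Proof.
move=> Ab; rewrite /dist_set.
have H : has_lbound [set Defs.edist z y | y in A].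
  by exists 0 => _ [y _ <-]; exact: enorm_ge0.
by apply: (ge_inf H); exists b.
Qed.

Lemma shift_in_mesh (Om : set pt) (M : seq (@simplex R n)) (h eps : R) (z v : pt) :
  open Om -> inner Om h `<=` Omega_h M -> 0 <= h -> h <= eps ->
  inner Om (2 * eps) z -> enorm v = 1 -> mesh_union M (z + eps *: v).
Proof.
move=> oOm sub h0 heps [Omz dz] v1.
have e0 : 0 <= eps by apply: le_trans heps.
pose p := fun t : R => z + (t * eps) *: v.
have bnd b : bdry Om b -> 2 * eps < Defs.edist z b.
  by move=> bb; apply: lt_le_trans dz (dist_le _ _ _ bb).
have ezp t : 0 <= t <= 1 -> Defs.edist z (p t) = t * eps.
  move=> /andP[t0 t1]; rewrite /Defs.edist /p opprD addrA subrr add0r enormN enormZ v1 mulr1.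
  by rewrite ger0_norm // mulr_ge0.
have pnb t : 0 <= t <= 1 -> ~ bdry Om (p t).
  move=> tt bb; have := bnd _ bb; rewrite ezp //.
  case/andP: tt => t0 t1; have : t * eps <= eps by rewrite ler_piMl.
  lra.
have intOm : interior Om = Om by apply/interior_id.
have yOm : Om (p 1).
  pose B := `[(0:R), 1]%classic `&` (p @^-1` Om).
  have cB := @segment_connected R 0 1 B.
  have memI t : `[(0:R), 1]%classic t <-> 0 <= t <= 1 by rewrite /= in_itv /=; split.
  suff EB : B = `[(0:R), 1]%classic.
    have : `[(0:R), 1]%classic 1 by apply/memI; rewrite ler01 lexx.
    by rewrite -EB => -[].
  apply: cB.
  - exists 0; split; first by apply/memI; rewrite lexx ler01.
    by rewrite /p /= mul0r scale0r addr0.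
  - exists (p @^-1` Om) => //; apply: open_comp => // t _; exact: cont_seg.
  - exists (p @^-1` closure Om).
      by apply: preimage_closed; [move=> t _; exact: cont_seg | exact: closed_closure].
    apply/seteqP; split => t [It Pt]; split => //=.
      exact: subset_closure.
    apply: contrapT => nO; apply: (pnb t); first by apply/memI.
    by split => //; rewrite intOm.
have y_eq : p 1 = z + eps *: v by rewrite /p mul1r.
rewrite -y_eq.
have [b0 bb0] : bdry Om !=set0.
  apply/set0P/negP => /eqP B0; move: dz; rewrite /dist_set B0 image_set0 inf0; lra.
have dy : dist_set (p 1) (bdry Om) > h.
  have le1 : dist_set z (bdry Om) - eps <= dist_set (p 1) (bdry Om).
    apply: lb_le_inf; first by exists (Defs.edist (p 1) b0), b0.
    move=> _ [b bb <-].
    have T := edist_triangle z (p 1) b.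
    have := dist_le _ z _ bb; rewrite ezp ?ler01 ?lexx // mul1r in T; lra.
  lra.
apply: interior_subset; apply: sub; split => //.
Qed.
End Geo.
Section Interp.
Context {R : realType} {n : nat}.
Local Notation pt := 'rV[R]_(n.+1).
Local Notation smp := (@simplex R n).

Lemma affine_eq (T : smp) (lam mu : 'I_n.+2 -> R) : aff_indep T ->
  \sum_i lam i = \sum_i mu i -> bary_point T lam = bary_point T mu -> forall i, lam i = mu i.
Proof.
move=> aT s1 s2 i; apply/eqP; rewrite -subr_eq0; apply/eqP.
apply: (aT (fun i => lam i - mu i)).
  by rewrite sumrB s1 subrr.
by rewrite (eq_bigr (fun i => lam i *: T i - mu i *: T i)) ?sumrB;
  [rewrite -/(bary_point T lam) -/(bary_point T mu) s2 subrr | move=> j _; rewrite scalerBl].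
Qed.

Lemma sum_deltaR (F : 'I_n.+2 -> R) a : \sum_i (i == a)%:R * F i = F a.
Proof. rewrite (bigD1 a) //= eqxx mul1r big1 ?addr0 // => i /negbTE ->; by rewrite mul0r. Qed.
Lemma sum_deltaV (F : 'I_n.+2 -> pt) a : \sum_i (i == a)%:R *: F i = F a.
Proof. rewrite (bigD1 a) //= eqxx scale1r big1 ?addr0 // => i /negbTE ->; by rewrite scale0r. Qed.
Lemma sum_delta1 a : \sum_(i < n.+2) (i == a)%:R = 1 :> R.
Proof. by rewrite (bigD1 a) //= eqxx big1 ?addr0 // => i /negbTE ->. Qed.

Lemma inj_vert (T : smp) : aff_indep T -> injective T.
Proof.
move=> aT a b Tab; apply/eqP/negPn/negP => nab.
have := aT (fun i => (i == a)%:R - (i == b)%:R).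
rewrite sumrB !sum_delta1 subrr => /(_ erefl).
have -> : \sum_i ((i == a)%:R - (i == b)%:R) *: T i = T a - T b.
  rewrite (eq_bigr (fun i => (i == a)%:R *: T i - (i == b)%:R *: T i)); last by move=> i _; rewrite scalerBl.
  by rewrite sumrB !sum_deltaV.
rewrite Tab subrr => /(_ erefl a); rewrite eqxx (negbTE nab) subr0 => /eqP.
by rewrite oner_eq0.
Qed.

Lemma cnt_vert (T : smp) q : aff_indep T -> (exists j, T j = q) -> \sum_j (T j == q)%:R = 1 :> R.
Proof.
move=> aT [j <-]; rewrite (bigD1 j) //= eqxx big1 ?addr0 // => i nij.
suff -> : (T i == T j) = false by [].
by apply/negbTE/eqP => /(@inj_vert T aT) eij; rewrite eij eqxx in nij.
Qed.

Lemma bary_coord (T : smp) lam k : bary_point T lam ord0 k = \sum_i lam i * T i ord0 k.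
Proof. by rewrite /bary_point summxE; apply: eq_bigr => i _; rewrite mxE. Qed.

Lemma key (M : seq smp) (cM : conforming_mesh M) T T' lam lam' (g : pt -> R) :
  T \in M -> T' \in M -> barycentric lam -> barycentric lam' ->
  bary_point T lam = bary_point T' lam' ->
  \sum_i lam i * g (T i) = \sum_j lam' j * g (T' j).
Proof.
move=> TM T'M [l0 l1] [l0' l1'] E.
have aT := cM.1 T TM; have aT' := cM.1 T' T'M.
have [mu [bmu hmu] emu] : [set bary_point T lam0 | lam0 in [set lam0 | barycentric lam0 /\
   forall i, lam0 i != 0 -> exists j, T' j = T i]] (bary_point T lam).
  rewrite -(cM.2 T T' TM T'M); split; first by exists lam.
  by rewrite E; exists lam'.
have lm : forall i, lam i = mu i.
  by apply: (@affine_eq T _ _ aT); [rewrite l1 bmu.2 | rewrite emu].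
have hv i : lam i != 0 -> exists j, T' j = T i by rewrite lm; apply: hmu.
have cnt i : lam i * \sum_j (T i == T' j)%:R = lam i.
  have [->|nz] := eqVneq (lam i) 0; first by rewrite !mul0r.
  rewrite (eq_bigr (fun j => (T' j == T i)%:R)); last by move=> j _; rewrite eq_sym.
  by rewrite (@cnt_vert T' _ aT' (hv i nz)) mulr1.
pose nu j := \sum_i lam i * (T i == T' j)%:R.
have gen (F : pt -> R) : \sum_j nu j * F (T' j) = \sum_i lam i * F (T i).
  rewrite /nu; under eq_bigr do rewrite mulr_suml.
  rewrite exchange_big /=; apply: eq_bigr => i _.
  rewrite (eq_bigr (fun j => lam i * (T i == T' j)%:R * F (T i))); last first.
    move=> j _; have [e|ne] := eqVneq (T i) (T' j); first by rewrite e.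
    by rewrite !mulr0 !mul0r.
  by rewrite -mulr_suml -mulr_sumr cnt.
have nl : forall j, nu j = lam' j.
  apply: (@affine_eq T' _ _ aT').
    have g1 := gen (fun _ => 1); rewrite l1'.
    transitivity (\sum_j nu j * 1); first by apply: eq_bigr => j _; rewrite mulr1.
    by rewrite g1 -[RHS]l1; apply: eq_bigr => i _; rewrite mulr1.
  rewrite -E; apply/rowP => k; rewrite !bary_coord.
  exact: (gen (fun p => p ord0 k)).
by rewrite -gen; apply: eq_bigr => j _; rewrite nl.
Qed.

Definition rep (M : seq smp) (x : pt) : smp * ('I_n.+2 -> R) :=
  match pselect (exists TL : smp * ('I_n.+2 -> R),
     [/\ TL.1 \in M, barycentric TL.2 & bary_point TL.1 TL.2 = x]) with
  | left H => proj1_sig (cid H)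
  | right _ => (fun _ => x, fun _ => 0)
  end.

Definition ev (M : seq smp) (w : pt -> R) (x : pt) : R :=
  \sum_i (rep M x).2 i * w ((rep M x).1 i).

Lemma rep_spec (M : seq smp) x : mesh_union M x ->
  [/\ (rep M x).1 \in M, barycentric (rep M x).2 & bary_point (rep M x).1 (rep M x).2 = x].
Proof.
move=> [T TM [lam bl E]]; rewrite /rep; case: pselect => [H|nH].
  exact: (proj2_sig (cid H)).
by exfalso; apply: nH; exists (T, lam).
Qed.

Lemma ev_Vh (M : seq smp) w x : inVh M w -> mesh_union M x -> ev M w x = w x.
Proof.
move=> wV /rep_spec [TM bl E].
by rewrite /ev -(wV _ TM _ bl) E.
Qed.

Lemma delta_bary (a : 'I_n.+2) : barycentric (fun i => (i == a)%:R : R).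
Proof. by split; [move=> i; exact: ler0n | exact: sum_delta1]. Qed.

Lemma bary_delta (T : smp) a : bary_point T (fun i => (i == a)%:R) = T a.
Proof. exact: sum_deltaV. Qed.

Lemma node_mesh (M : seq smp) y : nodes M y -> mesh_union M y.
Proof.
move=> [T TM [a <-]]; exists T => //; exists (fun i => (i == a)%:R); first exact: delta_bary.
exact: bary_delta.
Qed.

Lemma ev_node (M : seq smp) (cM : conforming_mesh M) w y : nodes M y -> ev M w y = w y.
Proof.
move=> Ny; have [T TM [a Ta]] := Ny.
have [TM' bl' E'] := rep_spec _ _ (node_mesh _ _ Ny).
rewrite /ev (@key M cM _ T _ (fun i => (i == a)%:R) w TM' TM bl' (delta_bary a)).
  by rewrite sum_deltaR Ta.
by rewrite E' bary_delta.
Qed.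

Lemma ev_inVh (M : seq smp) (cM : conforming_mesh M) w : inVh M (ev M w).
Proof.
move=> T TM lam bl.
have mx : mesh_union M (bary_point T lam) by exists T => //; exists lam.
have [TM' bl' E'] := rep_spec _ _ mx.
rewrite /ev (@key M cM _ T _ lam w TM' TM bl' bl E').
apply: eq_bigr => i _; congr (_ * _); symmetry.
apply: (@ev_node M cM w); by exists T => //; exists i.
Qed.

Lemma hat_pos (M : seq smp) (cM : conforming_mesh M) z' x : mesh_union M x ->
  (forall phi, is_hat M z' phi -> phi x > 0) ->
  exists i, 0 < (rep M x).2 i /\ (rep M x).1 i = z'.
Proof.
move=> mx H.
have hh : is_hat M z' (ev M (fun y => (y == z')%:R)).
  split; first exact: ev_inVh.
  by move=> y Ny; rewrite (@ev_node M cM _ _ Ny); case: (y == z').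
have := H _ hh; apply: contraPP => nE.
apply/negP; rewrite -leNgt /ev; apply: sumr_le0 => i _.
have [_ l0 _] := rep_spec _ _ mx.
have [e|ne] := eqVneq ((rep M x).1 i) z'.
  rewrite /= mulr1; have := l0.1 i; rewrite le0r => /orP[/eqP ->//|p].
  by exfalso; apply: nE; exists i.
by rewrite /= mulr0.
Qed.
End Interp.
Section Big.
Context {R : realType} {T : eqType}.
Implicit Types (s : seq T) (a c : R) (F : T -> R).

Lemma bmax_le s a F c : a <= c -> (forall v, v \in s -> F v <= c) ->
  \big[Num.max/a]_(v <- s) F v <= c.
Proof.
elim: s => [|x s IH] ac H; first by rewrite big_nil.
rewrite big_cons ge_max H ?mem_head //= IH // => v vs; apply: H.
by rewrite in_cons vs orbT.
Qed.

Lemma bmax_ge_base s a F : a <= \big[Num.max/a]_(v <- s) F v.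
Proof. by elim: s => [|x s IH]; rewrite ?big_nil // big_cons le_max IH orbT. Qed.

Lemma bmax_ge s a F v : v \in s -> F v <= \big[Num.max/a]_(v <- s) F v.
Proof.
elim: s => [|x s IH] //; rewrite in_cons big_cons le_max => /orP[/eqP->|vs].
  by rewrite lexx.
by rewrite IH ?orbT.
Qed.

Lemma bmax_eq s a F : \big[Num.max/a]_(v <- s) F v = a \/
  exists2 v, v \in s & \big[Num.max/a]_(v <- s) F v = F v.
Proof.
elim: s => [|x s IH]; first by left; rewrite big_nil.
rewrite big_cons; case: (leP (F x) (\big[Num.max/a]_(v <- s) F v)) => H.
  case: IH => [->|[v vs ->]]; first by left.
  by right; exists v => //; rewrite in_cons vs orbT.
by right; exists x => //; rewrite mem_head.
Qed.

Lemma bmin_ge s a F c : c <= a -> (forall v, v \in s -> c <= F v) ->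
  c <= \big[Num.min/a]_(v <- s) F v.
Proof.
elim: s => [|x s IH] ac H; first by rewrite big_nil.
rewrite big_cons le_min H ?mem_head //= IH // => v vs; apply: H.
by rewrite in_cons vs orbT.
Qed.

Lemma bmin_le_base s a F : \big[Num.min/a]_(v <- s) F v <= a.
Proof. by elim: s => [|x s IH]; rewrite ?big_nil // big_cons ge_min IH orbT. Qed.

Lemma bmin_le s a F v : v \in s -> \big[Num.min/a]_(v <- s) F v <= F v.
Proof.
elim: s => [|x s IH] //; rewrite in_cons big_cons ge_min => /orP[/eqP->|vs].
  by rewrite lexx.
by rewrite IH ?orbT.
Qed.

Lemma bmin_eq s a F : \big[Num.min/a]_(v <- s) F v = a \/
  exists2 v, v \in s & \big[Num.min/a]_(v <- s) F v = F v.
Proof.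
elim: s => [|x s IH]; first by left; rewrite big_nil.
rewrite big_cons; case: (leP (F x) (\big[Num.min/a]_(v <- s) F v)) => H.
  by right; exists x => //; rewrite mem_head.
case: IH => [->|[v vs ->]]; first by left.
by right; exists v => //; rewrite in_cons vs orbT.
Qed.

Lemma bmaxN s a F : \big[Num.max/- a]_(v <- s) (- F v) = - \big[Num.min/a]_(v <- s) F v.
Proof. by elim: s => [|x s IH]; rewrite ?big_nil // !big_cons IH oppr_min. Qed.

Lemma bminN s a F : \big[Num.min/- a]_(v <- s) (- F v) = - \big[Num.max/a]_(v <- s) F v.
Proof. by elim: s => [|x s IH]; rewrite ?big_nil // !big_cons IH oppr_max. Qed.

Lemma cvg_max2 (x y : nat -> R) lx ly : x k @[k --> \oo] --> lx -> y k @[k --> \oo] --> ly ->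
  Num.max (x k) (y k) @[k --> \oo] --> Num.max lx ly.
Proof.
move=> cx cy; rewrite maxr_absE; under eq_cvg do rewrite maxr_absE.
apply: cvgM; last exact: cvg_cst.
apply: cvgD; first exact: cvgD.
by apply: cvg_norm; apply: cvgB.
Qed.

Lemma cvg_min2 (x y : nat -> R) lx ly : x k @[k --> \oo] --> lx -> y k @[k --> \oo] --> ly ->
  Num.min (x k) (y k) @[k --> \oo] --> Num.min lx ly.
Proof.
move=> cx cy; rewrite minr_absE; under eq_cvg do rewrite minr_absE.
apply: cvgM; last exact: cvg_cst.
apply: cvgB; first exact: cvgD.
by apply: cvg_norm; apply: cvgB.
Qed.

Lemma cvg_bmax s (a : nat -> R) (F : T -> nat -> R) la lF :
  a k @[k --> \oo] --> la -> (forall v, v \in s -> F v k @[k --> \oo] --> lF v) ->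
  \big[Num.max/a k]_(v <- s) F v k @[k --> \oo] --> \big[Num.max/la]_(v <- s) lF v.
Proof.
elim: s => [|x s IH] ca cF.
  by rewrite big_nil; under eq_cvg do rewrite big_nil.
rewrite big_cons; under eq_cvg do rewrite big_cons.
apply: cvg_max2; first by apply: cF; rewrite mem_head.
by apply: IH => // v vs; apply: cF; rewrite in_cons vs orbT.
Qed.

Lemma cvg_bmin s (a : nat -> R) (F : T -> nat -> R) la lF :
  a k @[k --> \oo] --> la -> (forall v, v \in s -> F v k @[k --> \oo] --> lF v) ->
  \big[Num.min/a k]_(v <- s) F v k @[k --> \oo] --> \big[Num.min/la]_(v <- s) lF v.
Proof.
elim: s => [|x s IH] ca cF.
  by rewrite big_nil; under eq_cvg do rewrite big_nil.
rewrite big_cons; under eq_cvg do rewrite big_cons.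
apply: cvg_min2; first by apply: cF; rewrite mem_head.
by apply: IH => // v vs; apply: cF; rewrite in_cons vs orbT.
Qed.
End Big.

Lemma cvg_sumI {R : realType} {m : nat} (F : 'I_m -> nat -> R) (l : 'I_m -> R) :
  (forall i, F i k @[k --> \oo] --> l i) -> \sum_i F i k @[k --> \oo] --> \sum_i l i.
Proof.
move=> cF; apply: (@cvg_big _ _ +%R 0 predT add_continuous) => //.
Qed.

Section Op.
Context {R : realType} {n : nat}.
Local Notation pt := 'rV[R]_(n.+1).
Local Notation smp := (@simplex R n).
Variables (M : seq smp) (St : seq pt) (eps : R).
Hypothesis cM : conforming_mesh M.

Definition nl : seq pt := [seq T i | T <- M, i <- enum 'I_n.+2].

Lemma nodesP x : nodes M x <-> x \in nl.
Proof.
split.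
  move=> [T TM [i <-]]; apply/allpairsP; exists (T, i); split => //.
  by rewrite mem_enum.
by move/allpairsP => [[T i] [TM _ ->]]; exists T => //; exists i.
Qed.

Lemma exists_argmax (s : seq pt) (E : pt -> Prop) (F : pt -> R) :
  (exists y, y \in s /\ E y) ->
  exists z, [/\ z \in s, E z & forall y, y \in s -> E y -> F y <= F z].
Proof.
elim: s => [|x s IH]; first by case=> y [].
move=> [y0 [y0s Ey0]].
have [[y [ys Ey]]|nex] := pselect (exists y, y \in s /\ E y).
  have [z [zs Ez zmax]] := IH (ex_intro _ y (conj ys Ey)).
  have [[Ex Fxz]|nx] := pselect (E x /\ F z < F x).
    exists x; split => //; first by rewrite mem_head.
    move=> y'; rewrite in_cons => /orP[/eqP->|y's] Ey'; first by rewrite lexx.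
    by apply: le_trans (zmax _ y's Ey') (ltW Fxz).
  exists z; split => //; first by rewrite in_cons zs orbT.
  move=> y'; rewrite in_cons => /orP[/eqP->|y's] Ey'; last exact: zmax.
  by rewrite leNgt; apply/negP => lt; apply: nx.
have Ex : E x.
  move: y0s; rewrite in_cons => /orP[/eqP<-//|y0s].
  by exfalso; apply: nex; exists y0.
exists x; split => //; first by rewrite mem_head.
move=> y'; rewrite in_cons => /orP[/eqP->|y's] Ey'; first by rewrite lexx.
by exfalso; apply: nex; exists y'.
Qed.

Lemma rep_node x i : mesh_union M x -> nodes M ((rep M x).1 i).
Proof. by case/rep_spec => TM _ _; exists (rep M x).1 => //; exists i. Qed.

Lemma ev_le w w' c y : mesh_union M y -> (forall x, nodes M x -> w x <= w' x + c) ->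
  ev M w y <= ev M w' y + c.
Proof.
move=> my H; have [TM [l0 l1] _] := rep_spec _ _ my.
have -> : c = \sum_i (rep M y).2 i * c by rewrite -mulr_suml l1 mul1r.
rewrite /ev -big_split /=; apply: ler_sum => i _.
by rewrite -mulrDr ler_wpM2l //; apply: H; apply: rep_node.
Qed.

Lemma ev_N w y : ev M (fun x => - w x) y = - ev M w y.
Proof. by rewrite /ev -sumrN; apply: eq_bigr => i _; rewrite mulrN. Qed.

Lemma ev_ext w w' y : mesh_union M y -> (forall x, nodes M x -> w x = w' x) -> ev M w y = ev M w' y.
Proof. by move=> my H; apply: eq_bigr => i _; rewrite H //; apply: rep_node. Qed.

Lemma ev_diff w w' y : ev M w y - ev M w' y = \sum_i (rep M y).2 i * (w ((rep M y).1 i) - w' ((rep M y).1 i)).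
Proof. by rewrite /ev -sumrB; apply: eq_bigr => i _; rewrite mulrBr. Qed.

Lemma avg_le (lam : 'I_n.+2 -> R) (a : 'I_n.+2 -> R) c : barycentric lam ->
  (forall i, 0 < lam i -> a i <= c) -> \sum_i lam i * a i <= c.
Proof.
move=> [l0 l1] H; rewrite -[leRHS]mul1r -l1 mulr_suml; apply: ler_sum => i _.
have := l0 i; rewrite le0r => /orP[/eqP->|p]; first by rewrite !mul0r.
by rewrite ler_pM2l // H.
Qed.

Lemma avg_eq (lam : 'I_n.+2 -> R) (a : 'I_n.+2 -> R) c : barycentric lam ->
  (forall i, 0 < lam i -> a i <= c) -> c <= \sum_i lam i * a i ->
  forall i, 0 < lam i -> a i = c.
Proof.
move=> [l0 l1] H Hc i li; apply/eqP; rewrite eq_le H //=; apply: contraTT Hc.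
rewrite -!ltNge => ai.
rewrite -[ltRHS]mul1r -l1 mulr_suml (bigD1 i) //= [X in _ < X](bigD1 i) //=.
apply: ltr_leD; first by rewrite ltr_pM2l.
apply: ler_sum => j _; have := l0 j; rewrite le0r => /orP[/eqP->|p]; first by rewrite !mul0r.
by rewrite ler_pM2l // H.
Qed.

Variable (I : pt -> Prop).
Hypothesis IN : forall z, I z -> nodes M z.
Hypothesis shift : forall z v, I z -> v \in St -> mesh_union M (z + eps *: v).

Definition mx (w : pt -> R) z := \big[Num.max/w z]_(v <- St) ev M w (z + eps *: v).
Definition mn (w : pt -> R) z := \big[Num.min/w z]_(v <- St) ev M w (z + eps *: v).
Definition Phi (f : pt -> R) w z := 2^-1 * (eps ^+ 2 * f z + mx w z + mn w z).

Lemma mx_le w w' c z : I z -> (forall x, nodes M x -> w x <= w' x + c) -> mx w z <= mx w' z + c.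
Proof.
move=> Iz H; apply: bmax_le.
  by apply: le_trans (H _ (IN _ Iz)) _; rewrite lerD2r bmax_ge_base.
move=> v vS; apply: le_trans (ev_le _ _ _ _ (shift _ _ Iz vS) H) _.
by rewrite lerD2r /mx; apply: (bmax_ge _ _ (fun v => ev M w' (z + eps *: v))).
Qed.

Lemma mn_le w w' c z : I z -> (forall x, nodes M x -> w x <= w' x + c) -> mn w z <= mn w' z + c.
Proof.
move=> Iz H; case: (bmin_eq St (w' z) (fun v => ev M w' (z + eps *: v))) => [E|[v vS E]];
  rewrite /mn E.
  by apply: le_trans (H _ (IN _ Iz)); rewrite bmin_le_base.
by apply: le_trans (ev_le _ _ _ _ (shift _ _ Iz vS) H); rewrite bmin_le.
Qed.

Lemma mx_ext w w' z : I z -> (forall x, nodes M x -> w x = w' x) -> mx w z = mx w' z.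
Proof.
move=> Iz H; apply/eqP; rewrite eq_le; apply/andP; split.
  by rewrite -[leRHS]addr0; apply: mx_le => // x Nx; rewrite addr0 H.
by rewrite -[leRHS]addr0; apply: mx_le => // x Nx; rewrite addr0 H.
Qed.

Lemma mn_ext w w' z : I z -> (forall x, nodes M x -> w x = w' x) -> mn w z = mn w' z.
Proof.
move=> Iz H; apply/eqP; rewrite eq_le; apply/andP; split.
  by rewrite -[leRHS]addr0; apply: mn_le => // x Nx; rewrite addr0 H.
by rewrite -[leRHS]addr0; apply: mn_le => // x Nx; rewrite addr0 H.
Qed.

Lemma mxN w z : mx (fun x => - w x) z = - mn w z.
Proof.
rewrite /mx (eq_bigr (fun v => - ev M w (z + eps *: v))); first exact: bmaxN.
by move=> v _; rewrite ev_N.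
Qed.

Lemma mnN w z : mn (fun x => - w x) z = - mx w z.
Proof.
rewrite /mn (eq_bigr (fun v => - ev M w (z + eps *: v))); first exact: bminN.
by move=> v _; rewrite ev_N.
Qed.

Lemma PhiN f w z : Phi (fun x => - f x) (fun x => - w x) z = - Phi f w z.
Proof. rewrite /Phi mxN mnN; ring. Qed.

Lemma Phi_mono f w w' z : I z -> (forall x, nodes M x -> w x <= w' x) -> Phi f w z <= Phi f w' z.
Proof.
move=> Iz H.
have H' : forall x, nodes M x -> w x <= w' x + 0 by move=> x Nx; rewrite addr0 H.
have := @mx_le w w' 0 z Iz H'; have := @mn_le w w' 0 z Iz H'; rewrite /Phi !addr0 => h1 h2.
rewrite ler_pM2l ?invr_gt0 ?ltr0n //; lra.
Qed.

Lemma Phi_ext f w w' z : I z -> (forall x, nodes M x -> w x = w' x) -> Phi f w z = Phi f w' z.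
Proof. by move=> Iz H; rewrite /Phi (@mx_ext w w' z Iz H) (@mn_ext w w' z Iz H). Qed.


Definition M1c := forall S : set pt, S !=set0 -> S `<=` I ->
  exists z z', [/\ S z, nodes M z', ~ S z' & in_Ntilde M St eps z z'].

Lemma uniq_core f P Q : eps != 0 ->
  (forall x, nodes M x -> ~ I x -> P x = Q x) ->
  (forall z, I z -> P z = Phi f P z) -> (forall z, I z -> Q z = Phi f Q z) ->
  ((forall z, I z -> f z < 0) \/ ((forall z, I z -> f z = 0) /\ M1c)) ->
  forall x, nodes M x -> P x <= Q x.
Proof.
move=> e0 bd fP fQ cases x Nx; rewrite leNgt; apply/negP => Dx.
pose D y := P y - Q y.
have [y0 [y0n _ y0max]] := exists_argmax nl (fun _ => True) D
   (ex_intro _ x (conj (proj1 (nodesP x) Nx) Logic.I)).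
pose m := D y0.
have Dle y : nodes M y -> D y <= m by move/nodesP => yn; exact: y0max.
have m0 : 0 < m by apply: lt_le_trans (Dle _ Nx); rewrite /D subr_gt0.
pose E y := nodes M y /\ D y = m.
have EI y : E y -> I y.
  move=> [Ny Dy]; apply: contrapT => nI; move: Dy; rewrite /D bd // subrr => m0'.
  by move: m0; rewrite -m0' ltxx.
have [z0 [z0n Ez0 z0max]] := exists_argmax nl E P (ex_intro _ y0 (conj y0n (conj (proj2 (nodesP y0) y0n) erefl))).
pose E' y := E y /\ (forall y', E y' -> P y' <= P y).
have Ez0' : E' z0 by split => // y' Ey'; apply: z0max => //; apply/nodesP; case: Ey'.
have PQ y : nodes M y -> P y <= Q y + m by move=> Ny; have := Dle _ Ny; rewrite /D; lra.
have L0 z : E z -> mx P z = mx Q z + m /\ mn P z = mn Q z + m.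
  move=> Ez; have Iz := EI _ Ez.
  have h1 := @mx_le P Q m z Iz PQ; have h2 := @mn_le P Q m z Iz PQ.
  have e1 := fP _ Iz; have e2 := fQ _ Iz; move: Ez => [_]; rewrite /D /Phi in e1 e2 * => Dz.
  split; lra.
have L1 z : E' z -> mx P z = P z.
  move=> [Ez zmax]; have Iz := EI _ Ez; have [l0 _] := L0 _ Ez.
  apply/eqP; rewrite eq_le [P z <= _]bmax_ge_base andbT.
  case: (bmax_eq St (P z) (fun v => ev M P (z + eps *: v))) => [E1|[v vS ev_eq]]; first by rewrite /mx E1.
  rewrite /mx ev_eq.
  have my := shift _ _ Iz vS; set y := z + eps *: v in my ev_eq *.
  have [TM bl _] := rep_spec _ _ my.
  have hQ : ev M Q y <= mx Q z by rewrite /mx; apply: (bmax_ge _ _ (fun v => ev M Q (z + eps *: v))).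
  have hD : m <= \sum_i (rep M y).2 i * D ((rep M y).1 i).
    have evP : ev M P y = mx Q z + m by rewrite -l0 /mx ev_eq.
    by rewrite /D -ev_diff; lra.
  have allE := avg_eq _ (fun i => D ((rep M y).1 i)) _ bl (fun i _ => Dle _ (rep_node _ i my)) hD.
  rewrite /ev; apply: avg_le => // i li; apply: zmax; split; first exact: rep_node.
  exact: allE.
case: cases => [fneg|[fz M1]].
  have Iz0 := EI _ (proj1 Ez0').
  have := fP _ Iz0; rewrite /Phi (L1 _ Ez0') => e1.
  have h2 : mn P z0 <= P z0 by apply: bmin_le_base.
  have ep : 0 < eps ^+ 2 by rewrite exprn_even_gt0.
  have fn := fneg _ Iz0.
  have : eps ^+ 2 * f z0 < 0 by rewrite pmulr_rlt0.
  lra.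
have [z [z' [Sz Nz' nSz' Nt]]] := M1 E' (ex_intro _ z0 Ez0') (fun y Ey => EI _ (proj1 Ey)).
case: Nt => [ez|[_ [v vS hv]]]; first by apply: nSz'; rewrite ez.
have [Ez zmax] := Sz; have Iz := EI _ Ez.
have my := shift _ _ Iz vS.
have [i [li Ti]] := @hat_pos R n M cM _ _ my hv.
apply: nSz'; rewrite -Ti.
have [TM bl _] := rep_spec _ _ my.
have [l0 l2] := L0 _ Ez; have l1 := L1 _ Sz.
have e1 := fP _ Iz; have e2 := fQ _ Iz; rewrite /Phi fz // mulr0 add0r in e1 e2.
have [_ Dz] := Ez; rewrite /D in Dz.
have a1 : ev M P (z + eps *: v) <= mx P z by apply: (bmax_ge _ _ (fun v => ev M P (z + eps *: v))).
have a2 : mn P z <= ev M P (z + eps *: v) by apply: (bmin_le _ _ (fun v => ev M P (z + eps *: v))).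
have a3 : ev M Q (z + eps *: v) <= mx Q z by apply: (bmax_ge _ _ (fun v => ev M Q (z + eps *: v))).
have a4 : mn Q z <= ev M Q (z + eps *: v) by apply: (bmin_le _ _ (fun v => ev M Q (z + eps *: v))).
have hD : m <= \sum_i (rep M (z + eps *: v)).2 i * D ((rep M (z + eps *: v)).1 i).
  rewrite /D -ev_diff; lra.
have allE := avg_eq _ (fun i => D ((rep M (z + eps *: v)).1 i)) _ bl (fun i _ => Dle _ (rep_node _ i my)) hD.
have hP : P z <= \sum_i (rep M (z + eps *: v)).2 i * P ((rep M (z + eps *: v)).1 i).
  rewrite -/(ev M P _); lra.
have EE j : 0 < (rep M (z + eps *: v)).2 j -> E ((rep M (z + eps *: v)).1 j).
  by move=> lj; split; [exact: rep_node | exact: allE].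
have allP := avg_eq _ (fun j => P ((rep M (z + eps *: v)).1 j)) _ bl (fun j lj => zmax _ (EE j lj)) hP.
split; first exact: EE.
by move=> y' Ey'; rewrite (allP _ li); apply: zmax.
Qed.

Lemma uniq_le f P Q : eps != 0 ->
  (forall x, nodes M x -> ~ I x -> P x = Q x) ->
  (forall z, I z -> P z = Phi f P z) -> (forall z, I z -> Q z = Phi f Q z) ->
  ((forall z, I z -> f z < 0) \/ (forall z, I z -> 0 < f z) \/
    ((forall z, I z -> f z = 0) /\ M1c)) ->
  forall x, nodes M x -> P x <= Q x.
Proof.
move=> e0 bd fP fQ cases x Nx.
case: cases => [fn|[fp|c]]; [exact: (@uniq_core f P Q e0 bd fP fQ (or_introl fn) x Nx) | | exact: (@uniq_core f P Q e0 bd fP fQ (or_intror c) x Nx)].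
rewrite -lerN2.
apply: (@uniq_core (fun x => - f x) (fun x => - Q x) (fun x => - P x)) => //.
- by move=> u Nu nI; rewrite bd.
- by move=> z Iz; rewrite PhiN -fQ.
- by move=> z Iz; rewrite PhiN -fP.
- by left => z Iz; rewrite oppr_lt0 fp.
Qed.

Lemma uniq_eq f P Q : eps != 0 ->
  (forall x, nodes M x -> ~ I x -> P x = Q x) ->
  (forall z, I z -> P z = Phi f P z) -> (forall z, I z -> Q z = Phi f Q z) ->
  ((forall z, I z -> f z < 0) \/ (forall z, I z -> 0 < f z) \/
    ((forall z, I z -> f z = 0) /\ M1c)) ->
  forall x, nodes M x -> P x = Q x.
Proof.
move=> e0 bd fP fQ cases x Nx; apply/eqP; rewrite eq_le; apply/andP; split.
  exact: (@uniq_le f P Q e0 bd fP fQ cases x Nx).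
by apply: (@uniq_le f Q P e0) => // y Ny nI; rewrite bd.
Qed.

Lemma cvg_ev (s : nat -> pt -> R) L y : mesh_union M y ->
  (forall x, nodes M x -> s k x @[k --> \oo] --> L x) ->
  ev M (s k) y @[k --> \oo] --> ev M L y.
Proof.
move=> my cs; rewrite /ev; apply: cvg_sumI => i.
by apply: cvgMl_tmp; apply: cs; apply: rep_node.
Qed.

Lemma cvg_Phi f (s : nat -> pt -> R) L z : I z ->
  (forall x, nodes M x -> s k x @[k --> \oo] --> L x) ->
  Phi f (s k) z @[k --> \oo] --> Phi f L z.
Proof.
move=> Iz cs; rewrite /Phi; apply: cvgMl_tmp.
apply: cvgD; first apply: cvgD; first exact: cvg_cst.
  apply: cvg_bmax; first exact: cs (IN _ Iz).
  by move=> v vS; apply: cvg_ev => //; exact: shift.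
apply: cvg_bmin; first exact: cs (IN _ Iz).
by move=> v vS; apply: cvg_ev => //; exact: shift.
Qed.

Lemma lim_fix f (s : nat -> pt -> R) L :
  (forall x, nodes M x -> s k x @[k --> \oo] --> L x) ->
  (forall k z, I z -> s k.+1 z = Phi f (s k) z) -> forall z, I z -> L z = Phi f L z.
Proof.
move=> cs hs z Iz.
have c1 := @cvg_Phi f s L z Iz cs.
have c2 : Phi f (s k) z @[k --> \oo] --> L z.
  under eq_cvg do rewrite -hs //.
  by move: (cs z (IN _ Iz)); rewrite -(cvg_shiftS (fun k => s k z)).
by rewrite -(cvg_lim (@Rhausdorff R) c1) -(cvg_lim (@Rhausdorff R) c2).
Qed.

Definition G f gt (w : pt -> R) : pt -> R := fun x => if pselect (I x) then Phi f w x else gt x.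

Lemma G_mono f gt w w' : (forall x, nodes M x -> w x <= w' x) ->
  forall x, nodes M x -> G f gt w x <= G f gt w' x.
Proof. by move=> H x Nx; rewrite /G; case: pselect => // Ix; exact: Phi_mono. Qed.

Lemma iter_mono f gt k w w' : (forall x, nodes M x -> w x <= w' x) ->
  forall x, nodes M x -> iter k (G f gt) w x <= iter k (G f gt) w' x.
Proof. by move=> H; elim: k => [|k IH] //=; exact: G_mono. Qed.

Lemma iter_incr f gt w0 : (forall x, nodes M x -> w0 x <= G f gt w0 x) ->
  forall k x, nodes M x -> iter k (G f gt) w0 x <= iter k.+1 (G f gt) w0 x.
Proof. by move=> H; elim=> [|k IH] //= x Nx; exact: G_mono. Qed.

Lemma iter_decr f gt w0 : (forall x, nodes M x -> G f gt w0 x <= w0 x) ->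
  forall k x, nodes M x -> iter k.+1 (G f gt) w0 x <= iter k (G f gt) w0 x.
Proof. by move=> H; elim=> [|k IH] //= x Nx; exact: G_mono. Qed.

Lemma iter_le_u f gt (u : nat -> pt -> R) w0 :
  (forall x, nodes M x -> w0 x <= u 0%N x) ->
  (forall k z, I z -> u k.+1 z = Phi f (u k) z) ->
  (forall k x, nodes M x -> ~ I x -> u k.+1 x = gt x) ->
  forall k x, nodes M x -> iter k (G f gt) w0 x <= u k x.
Proof.
move=> h0 h1 h2; elim=> [|k IH] //= x Nx; rewrite /G; case: pselect => Ix.
  by rewrite h1 //; exact: Phi_mono.
by rewrite h2.
Qed.

Lemma iter_ge_u f gt (u : nat -> pt -> R) w0 :
  (forall x, nodes M x -> u 0%N x <= w0 x) ->
  (forall k z, I z -> u k.+1 z = Phi f (u k) z) ->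
  (forall k x, nodes M x -> ~ I x -> u k.+1 x = gt x) ->
  forall k x, nodes M x -> u k x <= iter k (G f gt) w0 x.
Proof.
move=> h0 h1 h2; elim=> [|k IH] //= x Nx; rewrite /G; case: pselect => Ix.
  by rewrite h1 //; exact: Phi_mono.
by rewrite h2.
Qed.

Lemma iter_lim f gt w0 (B : pt -> R) :
  (forall x, nodes M x -> w0 x <= G f gt w0 x) ->
  (forall k x, nodes M x -> iter k (G f gt) w0 x <= B x) ->
  exists L, [/\ forall x, nodes M x -> iter k (G f gt) w0 x @[k --> \oo] --> L x,
    forall z, I z -> L z = Phi f L z & forall x, nodes M x -> ~ I x -> L x = gt x].
Proof.
move=> hsub hB.
pose s k := iter k (G f gt) w0.
have cs x : nodes M x -> s k x @[k --> \oo] --> lim (s k x @[k --> \oo]).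
  move=> Nx; apply: nondecreasing_is_cvgn.
    by apply/nondecreasing_seqP => k; exact: iter_incr.
  by exists (B x) => _ [k _ <-]; exact: hB.
exists (fun x => lim (s k x @[k --> \oo])); split; first exact: cs.
  apply: (@lim_fix f s _ cs) => k z Iz.
  by rewrite /s /= /G; case: (pselect (I z)) => [_|nI] //; exfalso; apply: nI.
move=> x Nx nI.
have c1 := cs x Nx; move: c1; rewrite -(cvg_shiftS (fun k => s k x)).
have -> : [sequence s n.+1 x]_n = fun _ => gt x.
  by apply/funext => k /=; rewrite /s /= /G; case: (pselect (I x)).
by move/(cvg_lim (@Rhausdorff R)); rewrite lim_cst.
Qed.

Lemma iter_lim_dec f gt W0 (B : pt -> R) :
  (forall x, nodes M x -> G f gt W0 x <= W0 x) ->
  (forall k x, nodes M x -> B x <= iter k (G f gt) W0 x) ->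
  exists L, [/\ forall x, nodes M x -> iter k (G f gt) W0 x @[k --> \oo] --> L x,
    forall z, I z -> L z = Phi f L z & forall x, nodes M x -> ~ I x -> L x = gt x].
Proof.
move=> hsub hB.
pose s k := iter k (G f gt) W0.
have cs x : nodes M x -> s k x @[k --> \oo] --> lim (s k x @[k --> \oo]).
  move=> Nx; apply: nonincreasing_is_cvgn.
    by apply/nonincreasing_seqP => k; exact: iter_decr.
  by exists (B x) => _ [k _ <-]; exact: hB.
exists (fun x => lim (s k x @[k --> \oo])); split; first exact: cs.
  apply: (@lim_fix f s _ cs) => k z Iz.
  by rewrite /s /= /G; case: (pselect (I z)) => [_|nI] //; exfalso; apply: nI.
move=> x Nx nI.
have c1 := cs x Nx; move: c1; rewrite -(cvg_shiftS (fun k => s k x)).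
have -> : [sequence s n.+1 x]_n = fun _ => gt x.
  by apply/funext => k /=; rewrite /s /= /G; case: (pselect (I x)).
by move/(cvg_lim (@Rhausdorff R)); rewrite lim_cst.
Qed.

Theorem conv_main f gt (u : nat -> pt -> R) w0 W0 : eps != 0 ->
  ((forall z, I z -> f z < 0) \/ (forall z, I z -> 0 < f z) \/
    ((forall z, I z -> f z = 0) /\ M1c)) ->
  (forall x, nodes M x -> w0 x <= u 0%N x) -> (forall x, nodes M x -> u 0%N x <= W0 x) ->
  (forall x, nodes M x -> w0 x <= G f gt w0 x) -> (forall x, nodes M x -> G f gt W0 x <= W0 x) ->
  (forall k z, I z -> u k.+1 z = Phi f (u k) z) ->
  (forall k x, nodes M x -> ~ I x -> u k.+1 x = gt x) ->
  exists L, [/\ forall z, I z -> L z = Phi f L z, forall x, nodes M x -> ~ I x -> L x = gt x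
     & forall x, nodes M x -> u k x @[k --> \oo] --> L x].
Proof.
move=> e0 cases h0 h0' hsub hsup h1 h2.
have su := @iter_le_u f gt u w0 h0 h1 h2; have us := @iter_ge_u f gt u W0 h0' h1 h2.
have Sdec : forall k x, nodes M x -> iter k (G f gt) W0 x <= W0 x.
  elim=> [|k IH] x Nx //; apply: le_trans (IH _ Nx); exact: iter_decr.
have sinc : forall k x, nodes M x -> w0 x <= iter k (G f gt) w0 x.
  elim=> [|k IH] x Nx //; apply: le_trans (IH _ Nx) _; exact: iter_incr.
have [Ls [cLs fLs bLs]] := @iter_lim f gt w0 W0 hsub
  (fun k x Nx => le_trans (su k x Nx) (le_trans (us k x Nx) (Sdec k x Nx))).
have [LS [cLS fLS bLS]] := @iter_lim_dec f gt W0 w0 hsup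
  (fun k x Nx => le_trans (sinc k x Nx) (le_trans (su k x Nx) (us k x Nx))).
have eq : forall x, nodes M x -> Ls x = LS x.
  apply: (@uniq_eq f Ls LS e0) => // x Nx nI; by rewrite bLs // bLS.
exists Ls; split => // x Nx.
apply: (@squeeze_cvgr _ _ _ _ (fun k => iter k (G f gt) w0 x) (fun k => iter k (G f gt) W0 x)).
- by apply: nearW => k; rewrite su // us.
- exact: cLs.
- by rewrite eq //; exact: cLS.
Qed.

Definition ip (x y : pt) : R := \sum_(k < n.+1) x ord0 k * y ord0 k.

Lemma ssq_shift (z v : pt) (c : R) : ssq (z + c *: v) = ssq z + 2 * c * ip z v + c ^+ 2 * ssq v.
Proof.
rewrite /ssq /ip mulr_sumr mulr_sumr -!big_split /=; apply: eq_bigr => k _.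
rewrite !mxE; ring.
Qed.

Lemma ipN (z v : pt) : ip z (- v) = - ip z v.
Proof. by rewrite /ip -sumrN; apply: eq_bigr => k _; rewrite mxE mulrN. Qed.

Lemma ssqN (v : pt) : ssq (- v) = ssq v.
Proof. by apply: eq_bigr => k _; rewrite mxE sqrrN. Qed.

Lemma jensen1 (lam a : 'I_n.+2 -> R) : barycentric lam ->
  (\sum_i lam i * a i) ^+ 2 <= \sum_i lam i * a i ^+ 2.
Proof.
move=> [l0 l1]; set m := \sum_i lam i * a i.
have H : 0 <= \sum_i lam i * (a i - m) ^+ 2.
  by apply: sumr_ge0 => i _; rewrite mulr_ge0 ?sqr_ge0.
have E : \sum_i lam i * (a i - m) ^+ 2 =
    \sum_i lam i * a i ^+ 2 - 2 * m * m + m ^+ 2 * \sum_i lam i.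
  transitivity (\sum_i (lam i * a i ^+ 2 - 2 * m * (lam i * a i) + m ^+ 2 * lam i)).
    by apply: eq_bigr => i _; ring.
  by rewrite big_split /= sumrB -!mulr_sumr.
rewrite E l1 -/m in H; lra.
Qed.

Lemma jensen_ssq (T : smp) lam : barycentric lam ->
  ssq (bary_point T lam) <= \sum_i lam i * ssq (T i).
Proof.
move=> bl; rewrite /ssq.
under eq_bigr do rewrite bary_coord.
under [X in _ <= X]eq_bigr do rewrite mulr_sumr.
rewrite [X in _ <= X]exchange_big /=; apply: ler_sum => k _.
exact: jensen1.
Qed.

Lemma ev_quad_ge (Cc K : R) (y : pt) : 0 <= K -> mesh_union M y ->
  - Cc + K * ssq y <= ev M (fun x => - Cc + K * ssq x) y.
Proof.
move=> K0 my; have [TM bl E] := rep_spec _ _ my; have [l0 l1] := bl.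
rewrite /ev.
have -> : \sum_i (rep M y).2 i * (- Cc + K * ssq ((rep M y).1 i)) =
   - Cc + K * \sum_i (rep M y).2 i * ssq ((rep M y).1 i).
  transitivity (\sum_i ((rep M y).2 i * (- Cc) + K * ((rep M y).2 i * ssq ((rep M y).1 i)))).
    by apply: eq_bigr => i _; ring.
  by rewrite big_split /= -mulr_suml l1 mul1r -mulr_sumr.
rewrite lerD2l ler_wpM2l // -{1}E; exact: jensen_ssq.
Qed.

Lemma quad_sub (Cc K : R) (z : pt) :
  (forall v, v \in St -> enorm v = 1) -> (forall v, v \in St -> - v \in St) -> St != [::] ->
  0 <= K -> I z ->
  2 * (- Cc + K * ssq z) + K * eps ^+ 2 <=
    mx (fun x => - Cc + K * ssq x) z + mn (fun x => - Cc + K * ssq x) z.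
Proof.
move=> Su Ssym Sne K0 Iz; set s := (fun x => - Cc + K * ssq x).
rewrite -[- Cc + K * ssq z]/(s z).
have ss1 v : v \in St -> ssq v = 1 by move=> vS; rewrite -enorm_sq Su // expr1n.
have evge v : v \in St -> - Cc + K * (ssq z + 2 * eps * ip z v + eps ^+ 2) <= ev M s (z + eps *: v).
  move=> vS; apply: le_trans _ (@ev_quad_ge Cc K _ K0 (shift _ _ Iz vS)).
  by rewrite ssq_shift (ss1 _ vS) mulr1.
have mxge v : v \in St -> ev M s (z + eps *: v) <= mx s z.
  by move=> vS; apply: (bmax_ge _ _ (fun v => ev M s (z + eps *: v))).
have pair v : v \in St ->
   - Cc + K * (ssq z - 2 * eps * ip z v + eps ^+ 2) <= mx s z.
  move=> vS; apply: le_trans (mxge _ (Ssym _ vS)).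
  by apply: le_trans (evge _ (Ssym _ vS)); rewrite ipN mulrN.
case: (bmin_eq St (s z) (fun v => ev M s (z + eps *: v))) => [E|[v vS E]]; rewrite /mn E.
  case: St Sne Su Ssym mxge evge pair => // v0 St' _ _ _ mxge evge pair.
  have v0S : v0 \in v0 :: St' by rewrite mem_head.
  have h1 := le_trans (evge _ v0S) (mxge _ v0S); have h2 := pair _ v0S.
  rewrite /s; rewrite /s in h1 h2; nra.
have h1 := evge _ vS; have h2 := pair _ vS.
rewrite /s; rewrite /s in h1 h2; nra.
Qed.

End Op.

Section Final.
Context {R : realType} {n : nat}.
Local Notation pt := 'rV[R]_(n.+1).

Lemma maxN_mx (M : seq (@simplex R n)) (St : seq pt) eps w z :
  (forall v, v \in St -> mesh_union M (z + eps *: v)) -> inVh M w ->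
  maxN St eps w z = mx M St eps w z.
Proof. by move=> sh wV; apply: eq_big_seq => v vS; rewrite ev_Vh //; apply: sh. Qed.

Lemma minN_mn (M : seq (@simplex R n)) (St : seq pt) eps w z :
  (forall v, v \in St -> mesh_union M (z + eps *: v)) -> inVh M w ->
  minN St eps w z = mn M St eps w z.
Proof. by move=> sh wV; apply: eq_big_seq => v vS; rewrite ev_Vh //; apply: sh. Qed.

Lemma sum_ge_mem (s : seq pt) (F : pt -> R) x : (forall y, 0 <= F y) -> x \in s ->
  F x <= \sum_(y <- s) F y.
Proof.
move=> F0; elim: s => [|a s IH] //; rewrite in_cons big_cons => /orP[/eqP->|xs].
  by rewrite lerDl sumr_ge0.
by rewrite (le_trans (IH xs)) // lerDr.
Qed.

Lemma unit_vec : exists e : pt, enorm e = 1.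
Proof.
pose e : pt := \row_k ((k == ord0)%:R : R).
exists e; rewrite enormE.
suff -> : ssq e = 1 by rewrite sqrtr1.
rewrite /ssq (bigD1 ord0) //= mxE eqxx expr1n big1 ?addr0 // => i /negbTE ni.
by rewrite mxE ni expr0n.
Qed.
End Final.

Theorem theorem6p1 (R : realType) (n : nat)
  (Om : set 'rV[R]_(n.+1))
  (M : seq (@simplex R n)) (h eps theta : R) (St : seq 'rV[R]_(n.+1))
  (f g : 'rV[R]_(n.+1) -> R) (gt : R -> 'rV[R]_(n.+1) -> R)
  (u : nat -> 'rV[R]_(n.+1) -> R) :
  (* setting *)
  bounded_domain_cont_bdry Om ->
  conforming_mesh M ->
  meshsize M h ->
  inner Om h `<=` Omega_h M -> Omega_h M `<=` Om ->
  h <= eps -> eps <= diam Om ->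
  0 < theta -> theta <= 1 ->
  is_Stheta St theta ->
  (* (RHS.1) *)
  {within Om, continuous f} ->
  (exists C : R, forall x, Om x -> `|f x| <= C) ->
  (* (RHS.2) *)
  ((sup [set f x | x in Om] < 0 \/ inf [set f x | x in Om] > 0) \/
   (forall x, Om x -> f x = 0)) ->
  (* (BC.1) *)
  {within bdry Om, continuous g} ->
  (* (BC.2) *)
  (forall e : R, 0 < e -> {within closure Om, continuous (gt e)}) ->
  (forall alpha : R, 0 <= alpha <= 1 -> holder alpha (bdry Om) g ->
     (forall e : R, 0 < e -> holder alpha (closure Om) (gt e)) /\
     exists C : R, forall e : R, 0 < e ->
       forall x, bdry Om x -> `|g x - gt e x| <= C * e `^ alpha) ->
  (* (M.1) in case (RHS.2b) *)
  ((forall x, Om x -> f x = 0) -> condM1 Om M St eps) ->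
  (* the iteration *)
  (forall k, inVh M (u k)) ->
  (forall z, nodes_b Om M eps z -> u 0%N z = gt eps z) ->
  (forall k z, nodes_I Om M eps z ->
     u k.+1 z = 2^-1 * (eps ^+ 2 * f z + maxN St eps (u k) z + minN St eps (u k) z)) ->
  (forall k z, nodes_b Om M eps z -> u k.+1 z = gt eps z) ->
  (* conclusion: the discrete solution exists, and the iterates converge to it *)
  (exists U, solves_discrete Om M St eps f (gt eps) U) /\
  (forall U, solves_discrete Om M St eps f (gt eps) U ->
     forall x, mesh_union M x -> u k x @[k --> \oo] --> U x).
Proof.
move=> [oOm _ _ _ _] cM [hle [T0 T0M _]] sub1 sub2 heps _ _ _ [Su Ssym Scov]
  _ [Cf fbd] fcases _ _ _ M1 uV u0b uI ub.
have hpos : 0 < h.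
  have a0 := cM.1 T0 T0M.
  have := hle T0 T0M ord0 (lift ord0 ord0).
  apply: lt_le_trans; rewrite lt0r enorm_ge0 andbT; apply/eqP => /enorm_eq0 /eqP.
  rewrite subr_eq0 => /eqP /(@inj_vert R n T0 a0) /eqP.
  by rewrite (negbTE (neq_lift ord0 ord0)).
have e0 : eps != 0 by rewrite gt_eqF // (lt_le_trans hpos heps).
pose I := nodes_I Om M eps.
have IN : forall z, I z -> nodes M z by move=> z [].
have shift : forall z v, I z -> v \in St -> mesh_union M (z + eps *: v).
  move=> z v [_ Iz] vS.
  exact: (@shift_in_mesh R n Om M h eps z v oOm sub1 (ltW hpos) heps Iz (Su v vS)).
have Sne : St != [::].
  have [e1 he1] := @unit_vec R n.
  have [w wS _] := Scov e1 he1; by apply/eqP => S0; rewrite S0 in wS.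
have u_rec k z : I z -> u k.+1 z = Phi M St eps f (u k) z.
  move=> Iz; rewrite uI // /Phi (@maxN_mx _ _ M) ?(@minN_mn _ _ M) //; move=> v vS; exact: shift.
have u_bd k x : nodes M x -> ~ I x -> u k.+1 x = gt eps x.
  by move=> Nx nI; apply: ub; split.
have OmI z : I z -> Om z by move=> [_ []].
have fub : has_ubound [set f x | x in Om].
  exists Cf => _ [x Ox <-]; exact: le_trans (ler_norm _) (fbd x Ox).
have flb : has_lbound [set f x | x in Om].
  exists (- Cf) => _ [x Ox <-]; rewrite lerNl; apply: le_trans (fbd x Ox).
  by rewrite -normrN ler_norm.
have cases3 : (forall z, I z -> f z < 0) \/ (forall z, I z -> 0 < f z) \/
    ((forall z, I z -> f z = 0) /\ M1c M St eps I).
  case: fcases => [[hs|hi]|hz].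
  - left => z Iz; apply: le_lt_trans hs; apply: (ub_le_sup fub); exists z => //; exact: OmI.
  - right; left => z Iz; apply: lt_le_trans hi _; apply: (ge_inf flb); exists z => //; exact: OmI.
  - right; right; split; first by move=> z Iz; apply: hz; exact: OmI.
    exact: (M1 hz).
pose K := Num.max Cf 0.
have K0 : 0 <= K by rewrite le_max lexx orbT.
have fK x : Om x -> - K <= f x <= K.
  move=> Ox; have := fbd x Ox; have : Cf <= K by rewrite le_max lexx.
  move=> CK; rewrite -ler_norml => H; exact: le_trans H CK.
pose Cc := \sum_(y <- nl M) (K * ssq y + `|u 0%N y| + `|gt eps y|).
have hC x : nodes M x -> K * ssq x + `|u 0%N x| + `|gt eps x| <= Cc.
  move=> /nodesP Nx; apply: (@sum_ge_mem _ _ (nl M) (fun y => K * ssq y + `|u 0%N y| + `|gt eps y|) x) => // y.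
  by rewrite !addr_ge0 ?mulr_ge0 ?ssq_ge0.
have nrm (a : R) : - `|a| <= a /\ a <= `|a|.
  by split; [rewrite lerNl -normrN ler_norm | exact: ler_norm].
pose w0 := fun x : 'rV[R]_(n.+1) => - Cc + K * ssq x.
pose W0 := fun x : 'rV[R]_(n.+1) => - (- Cc + K * ssq x).
have h0 x : nodes M x -> w0 x <= u 0%N x.
  move=> Nx; have := hC x Nx; have [a1 _] := nrm (u 0%N x); have := normr_ge0 (gt eps x).
  rewrite /w0; lra.
have h0' x : nodes M x -> u 0%N x <= W0 x.
  move=> Nx; have := hC x Nx; have [_ a1] := nrm (u 0%N x); have := normr_ge0 (gt eps x).
  rewrite /W0; lra.
have hsub x : nodes M x -> w0 x <= G M St eps I f (gt eps) w0 x.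
  move=> Nx; rewrite /G; case: pselect => Ix /=.
    have q := @quad_sub R n M St eps I shift Cc K x Su Ssym Sne K0 Ix.
    move/andP: (fK x (OmI _ Ix)) => [fl _].
    have : 0 <= eps ^+ 2 * (f x + K) by rewrite mulr_ge0 ?sqr_ge0 // -lerBlDr sub0r.
    rewrite /Phi /w0; rewrite /w0 in q; lra.
  have := hC x Nx; have [a1 _] := nrm (gt eps x); have := normr_ge0 (u 0%N x).
  rewrite /w0; lra.
have hsup x : nodes M x -> G M St eps I f (gt eps) W0 x <= W0 x.
  move=> Nx; rewrite /G; case: pselect => Ix /=.
    have q := @quad_sub R n M St eps I shift Cc K x Su Ssym Sne K0 Ix.
    move/andP: (fK x (OmI _ Ix)) => [_ fu].
    have : 0 <= eps ^+ 2 * (K - f x) by rewrite mulr_ge0 ?sqr_ge0 // subr_ge0.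
    rewrite /Phi /W0 mxN mnN; lra.
  have := hC x Nx; have [_ a1] := nrm (gt eps x); have := normr_ge0 (u 0%N x).
  rewrite /W0; lra.
have [L [fL bL cL]] := @conv_main R n M St eps cM I IN shift f (gt eps) u w0 W0 e0 cases3
  h0 h0' hsub hsup u_rec u_bd.
have cmesh x : mesh_union M x -> u k x @[k --> \oo] --> ev M L x.
  move=> mx; under eq_cvg do rewrite -(ev_Vh _ _ _ (uV _) mx).
  exact: cvg_ev.
have fixU U : solves_discrete Om M St eps f (gt eps) U -> forall x, nodes M x -> U x = L x.
  move=> [UV Ueq Ub].
  apply: (@uniq_eq R n M St eps cM I IN shift f U L e0) => //.
  - by move=> x Nx nI; rewrite Ub ?bL //; split.
  - move=> z Iz; have := Ueq z Iz; rewrite /disc_inf_lap (@maxN_mx _ _ M) ?(@minN_mn _ _ M) //; last first.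
      by move=> v vS; exact: shift.
      by move=> v vS; exact: shift.
    move=> E; have E2 : 2 * U z - mx M St eps U z - mn M St eps U z = eps ^+ 2 * f z.
      by rewrite -E mulrA mulfV ?mul1r // expf_neq0.
    rewrite /Phi; lra.
split.
  pose U := fun x => lim (u k x @[k --> \oo]).
  have Ue x : mesh_union M x -> U x = ev M L x.
    by move=> mx; apply: (cvg_lim (@Rhausdorff R)); exact: cmesh.
  have UL x : nodes M x -> U x = L x.
    by move=> Nx; rewrite Ue ?(@ev_node R n M cM) //; exact: node_mesh.
  have UV : inVh M U.
    move=> T TM lam bl; rewrite Ue; last by exists T => //; exists lam.
    rewrite (@ev_inVh R n M cM L T TM lam bl); apply: eq_bigr => i _; rewrite Ue //.
    by apply: node_mesh; exists T => //; exists i.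
  exists U; split => //.
    move=> z Iz; rewrite /disc_inf_lap (@maxN_mx _ _ M) ?(@minN_mn _ _ M) //; try by move=> v vS; exact: shift.
    rewrite (@mx_ext R n M St eps I IN shift U L z Iz UL).
    rewrite (@mn_ext R n M St eps I IN shift U L z Iz UL) (UL z (IN z Iz)).
    have fl := fL z Iz.
    set a := mx M St eps L z in fl *; set b := mn M St eps L z in fl *.
    have -> : 2 * L z - a - b = eps ^+ 2 * f z by rewrite fl /Phi -/a -/b; field.
    by rewrite mulrA mulVf ?mul1r // expf_neq0.
  move=> z [Nz nI]; rewrite UL // bL //.
move=> U sU x mx.
have UV : inVh M U by case: sU.
rewrite -(ev_Vh _ _ _ UV mx) -(@ev_ext R n M L U x mx); first exact: cmesh.
by move=> y Ny; rewrite (fixU U sU).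
Qed.
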